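(* Let $S=(N,M_0)$ be a live H1S-WMG$_\le$ system with incidence matrix $I$. For any T-vector $Y\in\mathbb{N}^T$ and marking $M$ with $M_0+I\cdot Y=M$, there exist a marking $M'$ and a firing sequence $\sigma$ with $M_0[\sigma\rangle M'$ such that $\mathbf{P}(\sigma)\ge Y$ and $M[\sigma\ominus Y\rangle M'$. Consequently, the potential reachability graph of $S$ is initially directed (for every $M_1\in PR(S)$ there is a marking reachable both from $M_0$ and from $M_1$), $(N,M)$ is live for every such $M$, and thus $S$ is strongly live (every $M\in PR(S)$ yields a live system $(N,M)$).
   Context: A Petri net is $N=(P,T,W)$ with finite disjoint sets $P$, $T$ and weights $W:(P\times T)\cup(T\times P)\to\mathbb{N}$; incidence matrix $I(p,t)=W(t,p)-W(p,t)$; ${}^\bullet n=\{n':W(n',n)>0\}$, $n^\bullet=\{n':W(n,n')>0\}$. Transition $t$ is enabled at $M$ if $M(p)\ge W(p,t)$ for all $p$; firing yields $M+I[\cdot,t]$; $M[\sigma\rangle M'$ means the sequence $\sigma$ is feasible from $M$ and leads to $M'$. $\mathbf{P}(\sigma)$ is the Parikh vector of $\sigma$. $PR(S)=\{M\in\mathbb{N}^P:\exists Y\in\mathbb{N}^T, M=M_0+I\cdot Y\}$. A system is live if for every transition $t$ and every reachable marking $M'$ some marking reachable from $M'$ enables $t$. A place is shared if it has at least two output transitions. The net is homogeneous if for each place $p$ all weights $W(p,t)$, $t\in p^\bullet$, are equal. An H1S net is a homogeneous net with at most one shared place. It is H1S-WMG$_\le$ if, moreover, deleting the shared place (if any) together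 with its adjacent arcs (keeping all transitions) yields a WMG$_\le$, i.e. a net in which every place has at most one input and at most one output transition. Residue: for a sequence $\sigma$ and $Y\in\mathbb{N}^T$, $\sigma\ominus Y$ is obtained from $\sigma$ by removing, for each transition $t$, the $\min\{\mathbf{P}(\sigma)(t),Y(t)\}$ leftmost occurrences of $t$. *)

(* Defs.v *)
From mathcomp Require Import all_boot all_order all_algebra.
Set Implicit Arguments. Unset Strict Implicit. Unset Printing Implicit Defensive.
Import GRing.Theory Num.Theory.

(* A Petri net with finite disjoint sets of places P and transitions T
   (disjointness is automatic: they are distinct types). *)
Record net (P T : finType) := Net {
  wpt : P -> T -> nat;
  wtp : T -> P -> nat
}.

Section PetriDefs.
Variables (P T : finType) (N : net P T).

Definition marking := {ffun P -> nat}.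

Definition incidence (p : P) (t : T) : int :=
  (Posz (wtp N t p) - Posz (wpt N p t))%R.

Definition preset_p (p : P) : {set T} := [set t | 0 < wtp N t p].
Definition postset_p (p : P) : {set T} := [set t | 0 < wpt N p t].

Definition enabled (M : marking) (t : T) : bool :=
  [forall p, wpt N p t <= M p].

Definition fire (M : marking) (t : T) : marking :=
  [ffun p => M p - wpt N p t + wtp N t p].

Fixpoint fires (M : marking) (s : seq T) (M' : marking) : Prop :=
  match s with
  | [::] => M = M'
  | t :: s' => enabled M t /\ fires (fire M t) s' M'
  end.

Definition reachable (M M' : marking) : Prop := exists s, fires M s M'.

Definition parikh (s : seq T) (t : T) : nat := count_mem t s.

(* residue s (-) Y: remove, for each t, the min(P(s)(t), Y(t)) leftmost
   occurrences of t *)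
Fixpoint residue (s : seq T) (Y : T -> nat) : seq T :=
  match s with
  | [::] => [::]
  | t :: s' =>
      if 0 < Y t then residue s' (fun u => if u == t then (Y u).-1 else Y u)
      else t :: residue s' Y
  end.

Definition marking_eq (M0 : marking) (Y : T -> nat) (M : marking) : Prop :=
  forall p, Posz (M p) = (Posz (M0 p) + \sum_(t : T) incidence p t * Posz (Y t))%R.

Definition PR (M0 : marking) (M : marking) : Prop :=
  exists Y : T -> nat, marking_eq M0 Y M.

Definition live (M0 : marking) : Prop :=
  forall (t : T) (M' : marking), reachable M0 M' ->
    exists M'', reachable M' M'' /\ enabled M'' t.

Definition shared (p : P) : bool := 2 <= #|postset_p p|.

Definition homogeneous : Prop :=
  forall p t t', t \in postset_p p -> t' \in postset_p p ->
    wpt N p t = wpt N p t'.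

Definition H1S : Prop :=
  homogeneous /\ (forall p q, shared p -> shared q -> p = q).

(* removing the (unique, if any) shared place leaves a WMG_<= : every
   remaining place has at most one input and at most one output transition *)
Definition H1S_WMGle : Prop :=
  H1S /\ (forall p, ~~ shared p -> #|preset_p p| <= 1 /\ #|postset_p p| <= 1).

Definition initially_directed (M0 : marking) : Prop :=
  forall M1, PR M0 M1 -> exists M, reachable M0 M /\ reachable M1 M.

Definition strongly_live (M0 : marking) : Prop :=
  forall M, PR M0 M -> live M.

End PetriDefs.

(* Main.v *)
Set Warnings "-notation-overridden,-ambiguous-paths".
Require Import Defs.
From mathcomp Require Import all_boot all_order all_algebra.
From mathcomp Require Import zify.
Set Implicit Arguments. Unset Strict Implicit. Unset Printing Implicit Defensive.
Import GRing.Theory Num.Theory.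

Lemma fires_cat (P T : finType) (N : net P T) (A B C : marking P) (s1 s2 : seq T) :
  fires N A s1 B -> fires N B s2 C -> fires N A (s1 ++ s2) C.
Proof.
elim: s1 A => [|t s IH] A /=; first by move=> ->.
by case=> He Hf Hg; split=> //; apply: IH Hf Hg.
Qed.

Lemma live_fires (P T : finType) (N : net P T) (A X : marking P) (s : seq T) :
  live N A -> fires N A s X -> live N X.
Proof.
move=> HL Hs t M' [s' Hs']; apply: HL; exists (s ++ s'); exact: fires_cat Hs Hs'.
Qed.

Lemma fire_int (P T : finType) (N : net P T) (A : marking P) t p :
  enabled N A t -> Posz (fire N A t p) = (Posz (A p) + incidence N p t)%R.
Proof.
move=> /forallP /(_ p) H; rewrite /fire ffunE /incidence.
lia.
Qed.

Lemma meq_step2 (P T : finType) (N : net P T) (A B : marking P) (D : T -> nat) t :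
  enabled N A t -> enabled N B t -> marking_eq N A D B ->
  marking_eq N (fire N A t) D (fire N B t).
Proof.
move=> HA HB HM p; rewrite !fire_int // HM.
rewrite /incidence; lia.
Qed.

Definition decD (T : finType) (D : T -> nat) (d : T) :=
  fun u => if u == d then (D u).-1 else D u.

Lemma meq_debt (P T : finType) (N : net P T) (A B : marking P) (D : T -> nat) d :
  enabled N A d -> 0 < D d -> marking_eq N A D B ->
  marking_eq N (fire N A d) (decD D d) B.
Proof.
move=> HA Hd HM p; rewrite fire_int // HM.
rewrite (bigD1 d) //= [in RHS](bigD1 d) //= /decD eqxx.
have -> : (\sum_(i | i != d) (incidence N p i * Posz (if i == d then (D i).-1 else D i))
  = \sum_(i | i != d) (incidence N p i * Posz (D i)))%R.
  by apply: eq_bigr => i /negbTE ->.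
have -> : Posz (D d) = (Posz (D d).-1 + 1)%R by rewrite -PoszD addn1 prednK.
rewrite mulrDr mulr1.
set S := (\sum_(i | i != d) _)%R. set k := (incidence N p d * _)%R. lia.
Qed.

Lemma residue_ext (T : finType) (s : seq T) (Y Y' : T -> nat) :
  (forall t, Y t = Y' t) -> residue s Y = residue s Y'.
Proof.
elim: s Y Y' => [|t s IH] Y Y' H //=.
rewrite H; case: ifP => _; last by rewrite (IH Y Y').
by apply: IH => u; rewrite !H.
Qed.

Lemma residue_free (T : finType) (r s : seq T) (Y : T -> nat) :
  all (fun t => Y t == 0) r -> residue (r ++ s) Y = r ++ residue s Y.
Proof.
elim: r => [|t r IH] //= /andP [/eqP H0 Ha].
by rewrite H0 /= IH.
Qed.

Lemma inc_term (P T : finType) (N : net P T) r i (D : T -> nat) :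
  (incidence N r i * Posz (D i))%R = (Posz (wtp N i r * D i) - Posz (wpt N r i * D i))%R.
Proof. by rewrite /incidence mulrBl -!PoszM. Qed.

Lemma post_uniq (P T : finType) (N : net P T) r x y :
  H1S_WMGle N -> ~~ shared N r -> 0 < wpt N r x -> 0 < wpt N r y -> x = y.
Proof.
move=> [_ HW] ns Hx Hy; have [_ /card_le1_eqP H] := HW r ns.
by apply: H; rewrite /postset_p inE.
Qed.

Lemma pre_uniq (P T : finType) (N : net P T) r x y :
  H1S_WMGle N -> ~~ shared N r -> 0 < wtp N x r -> 0 < wtp N y r -> x = y.
Proof.
move=> [_ HW] ns Hx Hy; have [/card_le1_eqP H _] := HW r ns.
by apply: H; rewrite /preset_p inE.
Qed.

Lemma shared_two (P T : finType) (N : net P T) r x y :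
  0 < wpt N r x -> 0 < wpt N r y -> x != y -> shared N r.
Proof.
move=> Hx Hy Hxy; rewrite /shared.
have <- : #|[set x; y]| = 2 by rewrite cards2 Hxy.
apply: subset_leq_card; apply/subsetP => z; rewrite !inE /postset_p.
by case/orP => /eqP ->.
Qed.

Definition Qblk (P T : finType) (N : net P T) (D : T -> nat) (X : marking P) :=
  forall u, 0 < D u -> exists r, X r < wpt N r u /\
    (forall t', 0 < wtp N t' r -> 0 < D t') /\ (forall t', 0 < wpt N r t' -> 0 < D t').

Lemma Qblk_fire (P T : finType) (N : net P T) (D : T -> nat) X t :
  Qblk N D X -> enabled N X t -> Qblk N D (fire N X t).
Proof.
move=> Q En.
have Dt : D t = 0.
  apply/eqP; rewrite -leqn0 leqNgt; apply/negP => Dt.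
  have [r [Hr _]] := Q t Dt.
  by move/forallP: En => /(_ r); rewrite leqNgt Hr.
move=> u Du; have [r [Hr [H1 H2]]] := Q u Du.
exists r; split => //; rewrite /fire ffunE.
have -> : wpt N r t = 0.
  by apply/eqP; rewrite -leqn0 leqNgt; apply/negP => /H2; rewrite Dt.
have -> : wtp N t r = 0.
  by apply/eqP; rewrite -leqn0 leqNgt; apply/negP => /H1; rewrite Dt.
by rewrite subn0 addn0.
Qed.

Lemma Qblk_fires (P T : finType) (N : net P T) (D : T -> nat) X s Y :
  Qblk N D X -> fires N X s Y -> Qblk N D Y.
Proof.
elim: s X => [|t s IH] X /=; first by move=> Q <-.
by move=> Q [En Hf]; apply: IH Hf; apply: Qblk_fire.
Qed.

Lemma stuck (P T : finType) (N : net P T) (D : T -> nat) (A B : marking P) :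
  H1S_WMGle N -> live N A -> marking_eq N A D B -> (exists u, 0 < D u) ->
  (forall u r, 0 < D u -> shared N r -> 0 < wpt N r u -> wpt N r u <= A r) ->
  exists u, 0 < D u /\ enabled N A u.
Proof.
move=> HN HL HM [u0 Du0] Hsh.
case: (boolP [exists u, (0 < D u) && enabled N A u]) => [/existsP [u /andP[]] | Hn].
  by eauto.
exfalso.
have Q : Qblk N D A.
  move=> u Du.
  have : ~~ enabled N A u.
    apply/negP => En; move/negP: Hn; apply; apply/existsP; exists u; by rewrite Du.
  move/forallPn => [r]; rewrite -ltnNge => Hr.
  exists r; split => //.
  have wpos : 0 < wpt N r u by lia.
  have ns : ~~ shared N r.
    apply/negP => sh; have := Hsh u r Du sh wpos; lia.
  split; last first.
    by move=> t' Ht'; rewrite (post_uniq HN ns Ht' wpos).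
  move=> t' Ht'; rewrite lt0n; apply/negP => /eqP Dt'.
  have HMr := HM r.
  have E : (\sum_(i : T) incidence N r i * Posz (D i))%R = (- Posz (wpt N r u * D u))%R.
    rewrite (bigD1 u) //= big1 => [|i iu].
      rewrite inc_term addr0.
      have -> : wtp N u r = 0.
        apply/eqP; rewrite -leqn0 leqNgt; apply/negP => Hu.
        by move: Du; rewrite (pre_uniq HN ns Hu Ht') Dt'.
      by rewrite mul0n sub0r.
    rewrite inc_term.
    have -> : wpt N r i = 0.
      apply/eqP; rewrite -leqn0 leqNgt; apply/negP => Hi.
      by move: iu; rewrite (post_uniq HN ns Hi wpos) eqxx.
    have -> : wtp N i r * D i = 0.
      case: (posnP (wtp N i r)) => [-> //|Hi].
      by rewrite (pre_uniq HN ns Hi Ht') Dt' muln0.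
    by rewrite mul0n subrr.
  rewrite E in HMr.
  have : wpt N r u <= wpt N r u * D u by rewrite leq_pmulr.
  lia.
have [M'' [[s Hs] En]] := HL u0 A (ex_intro _ [::] erefl).
have [r [Hr _]] := Qblk_fires Q Hs Du0.
by move/forallP: En => /(_ r); rewrite leqNgt Hr.
Qed.

Lemma enB (P T : finType) (N : net P T) (D : T -> nat) (A B : marking P) t :
  H1S_WMGle N -> live N A -> marking_eq N A D B -> enabled N A t -> D t = 0 ->
  ~~ [exists d, (0 < D d) && enabled N A d] -> enabled N B t.
Proof.
move=> HN HL HM En Dt Hn; apply/forallP => r.
case: (posnP (wpt N r t)) => [-> //|wt].
case: (boolP [forall u, (0 < wpt N r u) ==> (D u == 0)]) => [/forallP Hall | /forallPn [v]].
  have HMr := HM r.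
  have Hs : (0 <= \sum_(i : T) incidence N r i * Posz (D i))%R.
    apply: sumr_ge0 => i _; rewrite inc_term.
    have -> : wpt N r i * D i = 0.
      case: (posnP (wpt N r i)) => [-> //|Hi].
      by have := Hall i; rewrite Hi /= => /eqP ->; rewrite muln0.
    by rewrite subr0.
  move/forallP: En => /(_ r) Ear.
  lia.
rewrite negb_imply => /andP [wv Dv].
have vt : v != t by apply/negP => /eqP vt; move: Dv; rewrite vt Dt.
have sh := shared_two wv wt vt.
exfalso; move/negP: Hn; apply.
have [u [Du Eu]] : exists u, 0 < D u /\ enabled N A u.
  apply: (stuck HN HL HM).
    by exists v; rewrite lt0n.
  move=> u r' Du sh' wu.
  have er : r' = r by apply: HN.1.2.
  subst r'.
  have -> : wpt N r u = wpt N r t by apply: HN.1.1; rewrite /postset_p inE.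
  by move/forallP: En => /(_ r).
by apply/existsP; exists u; rewrite Du.
Qed.

Lemma walk (P T : finType) (N : net P T) (D : T -> nat) (rho : seq T) :
  H1S_WMGle N -> forall (A B X : marking P) u,
  live N A -> marking_eq N A D B -> fires N A rho X -> enabled N X u -> 0 < D u ->
  exists rho' X' Y' d, all (fun t => D t == 0) rho' /\ fires N A rho' X' /\
    fires N B rho' Y' /\ enabled N X' d /\ 0 < D d /\ marking_eq N X' D Y' /\ live N X'.
Proof.
move=> HN; elim: rho => [|t rho IH] A B X u HL HM /=.
  by move=> <- En Du; exists [::], A, B, u.
move=> [Et Hf] En Du.
case: (boolP [exists d, (0 < D d) && enabled N A d]) => [/existsP [d /andP[Dd Ed]] | Hn].
  by exists [::], A, B, d.
have Dt : D t = 0.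
  apply/eqP; rewrite -leqn0 leqNgt; apply/negP => Dt.
  by move/negP: Hn; apply; apply/existsP; exists t; rewrite Dt.
have EBt := enB HN HL HM Et Dt Hn.
have HL' : live N (fire N A t) by apply: (live_fires (s := [:: t])) HL _.
have HM' := meq_step2 Et EBt HM.
have [rho' [X' [Y' [d [H1 [H2 [H3 [H4 [H5 [H6 H7]]]]]]]]]] := IH _ _ _ _ HL' HM' Hf En Du.
exists (t :: rho'), X', Y', d; rewrite /= Dt eqxx /=; by do !split.
Qed.

Lemma zero_case (P T : finType) (N : net P T) (D : T -> nat) (A B : marking P) :
  (forall t, D t = 0) -> marking_eq N A D B ->
  exists A' s, fires N A s A' /\ (forall t, D t <= parikh s t) /\ fires N B (residue s D) A'.
Proof.
move=> H0 HM; exists A, [::]; split => //; split; first by move=> t; rewrite H0.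
apply/ffunP => p; apply/eqP; rewrite -eqz_nat; apply/eqP; rewrite HM big1 ?addr0 //.
by move=> i _; rewrite H0 mulr0.
Qed.

Lemma sum_decD (T : finType) (D : T -> nat) d :
  0 < D d -> \sum_(t : T) D t = (\sum_(t : T) decD D d t).+1.
Proof.
move=> Dd; rewrite (bigD1 d) //= [in RHS](bigD1 d) //= /decD eqxx.
have -> : \sum_(i | i != d) (if i == d then (D i).-1 else D i) = \sum_(i | i != d) D i.
  by apply: eq_bigr => i /negbTE ->.
by rewrite -addSn prednK.
Qed.

Lemma gen (P T : finType) (N : net P T) n :
  H1S_WMGle N -> forall (A B : marking P) (D : T -> nat),
  \sum_(t : T) D t <= n -> live N A -> marking_eq N A D B ->
  exists A' s, fires N A s A' /\ (forall t, D t <= parikh s t) /\ fires N B (residue s D) A'.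
Proof.
move=> HN; elim: n => [|n IH] A B D Hs HL HM.
  apply: zero_case HM => t; apply/eqP; rewrite -leqn0.
  by apply: leq_trans Hs; rewrite (bigD1 t) //= leq_addr.
case: (boolP [exists u, 0 < D u]) => [/existsP [u Du] | Hn]; last first.
  apply: zero_case HM => t; apply/eqP; rewrite -leqn0 leqNgt; apply/negP => Dt.
  by move/negP: Hn; apply; apply/existsP; exists t.
have [M'' [[s0 Hs0] En]] := HL u A (ex_intro _ [::] erefl).
have [rho [X' [Y' [d [H1 [H2 [H3 [H4 [H5 [H6 H7]]]]]]]]]] := walk HN HL HM Hs0 En Du.
have HM2 := meq_debt H4 H5 H6.
have HL2 : live N (fire N X' d) by apply: (live_fires (s := [:: d])) H7 _.
have Hs2 : \sum_(t : T) decD D d t <= n by move: Hs; rewrite (sum_decD H5).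
have [A' [s' [F1 [F2 F3]]]] := IH _ _ _ Hs2 HL2 HM2.
exists A', (rho ++ d :: s'); split; last split.
- by apply: fires_cat H2 _; split.
- move=> t; rewrite /parikh count_cat /= addnCA.
  have := F2 t; rewrite /decD /parikh; case: eqP => [->|/eqP td].
    rewrite eqxx /nat_of_bool => h; rewrite -(prednK H5) add1n ltnS; apply: leq_trans h _; exact: leq_addl.
  rewrite eq_sym (negbTE td) add0n => h; apply: leq_trans h _; exact: leq_addl.
- rewrite residue_free //= H5.
  exact: fires_cat H3 F3.
Qed.

Lemma meq_ext (P T : finType) (N : net P T) (A B : marking P) (D D' : T -> nat) :
  (forall t, D t = D' t) -> marking_eq N A D B -> marking_eq N A D' B.
Proof.
by move=> E HM p; rewrite HM; congr (_ + _)%R; apply: eq_bigr => i _; rewrite E.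
Qed.

Lemma meq_fire (P T : finType) (N : net P T) (A B : marking P) (D : T -> nat) t :
  marking_eq N A D B -> enabled N B t ->
  marking_eq N A (fun u => D u + (u == t)) (fire N B t).
Proof.
move=> HM En p; rewrite fire_int // HM.
rewrite [in RHS](eq_bigr (fun u => incidence N p u * Posz (D u) + incidence N p u * Posz (u == t))%R);
  last by move=> i _; rewrite PoszD mulrDr.
rewrite big_split /= -addrA; congr (_ + (_ + _))%R.
rewrite (bigD1 t) //= eqxx mulr1 big1 ?addr0 //.
by move=> i /negbTE ->; rewrite mulr0.
Qed.

Lemma meq_fires (P T : finType) (N : net P T) (A B C : marking P) (D : T -> nat) s :
  marking_eq N A D B -> fires N B s C ->
  marking_eq N A (fun u => D u + parikh s u) C.
Proof.
elim: s D B => [|t s IH] D B HM /=.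
  by move=> <-; apply: meq_ext HM => u; rewrite /parikh addn0.
move=> [En Hf]; have := IH _ _ (meq_fire HM En) Hf.
apply: meq_ext => u; rewrite /parikh /= -addnA; congr (_ + _); rewrite eq_sym.
by [].
Qed.

Theorem mainTheorem5 (P T : finType) (N : net P T) (M0 : marking P) :
  H1S_WMGle N -> live N M0 ->
  (forall (Y : T -> nat) (M : marking P), marking_eq N M0 Y M ->
     exists (M' : marking P) (s : seq T),
       fires N M0 s M' /\ (forall t, Y t <= parikh s t) /\
       fires N M (residue s Y) M')
  /\ initially_directed N M0
  /\ (forall (Y : T -> nat) (M : marking P), marking_eq N M0 Y M -> live N M)
  /\ strongly_live N M0.
Proof.
move=> HN HL.
have part1 : forall (Y : T -> nat) (M : marking P), marking_eq N M0 Y M ->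
     exists (M' : marking P) (s : seq T),
       fires N M0 s M' /\ (forall t, Y t <= parikh s t) /\
       fires N M (residue s Y) M'.
  by move=> Y M HM; apply: (gen (n := \sum_(t : T) Y t)) HN _ _ _ (leqnn _) HL HM.
have part3 : forall (Y : T -> nat) (M : marking P), marking_eq N M0 Y M -> live N M.
  move=> Y M HM t M1 [tau Htau].
  have [M' [s [F1 [_ F3]]]] := part1 _ _ (meq_fires HM Htau).
  have [M'' [[s2 Hs2] En]] := live_fires HL F1 t (ex_intro _ [::] erefl).
  exists M''; split => //; exists (residue s (fun u => Y u + parikh tau u) ++ s2).
  exact: fires_cat F3 Hs2.
split => //; split; last split => //.
  move=> M1 [Y HM]; have [M' [s [F1 [_ F3]]]] := part1 _ _ HM.
  by exists M'; split; [exists s | exists (residue s Y)].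
by move=> M [Y HM]; apply: part3 HM.
Qed.
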